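(* Let $p,q$ be distinct primes and $N=p+q$. Let $M=(m_{ik})_{i,k\in\mathbb Z/N\mathbb Z}$ be an $N\times N$ matrix with entries in $\mathbb Z/pq\mathbb Z$ such that $(e^{2\pi i\,m_{ik}/pq})$ is a complex Hadamard matrix. For $i\in\mathbb Z/N\mathbb Z$ let $L_i(k)=m_{ik}$ and for $i,j$ let $L_{ij}=L_j-L_i:\mathbb Z/N\mathbb Z\to\mathbb Z/pq\mathbb Z$. Then for all distinct $i,j\in\mathbb Z/N\mathbb Z$ there exist a partition $\mathbb Z/N\mathbb Z=P_{ij}\sqcup Q_{ij}\sqcup R_{ij}$ and $r\in\mathbb Z/pq\mathbb Z$ such that: (i) $\#R_{ij}=2$ and $L_{ij}(k)=r$ for all $k\in R_{ij}$; (ii) $\#P_{ij}=p-1$ and $\{L_{ij}(k):k\in P_{ij}\}=(r+q(\mathbb Z/pq\mathbb Z))\setminus\{r\}$; (iii) $\#Q_{ij}=q-1$ and $\{L_{ij}(k):k\in Q_{ij}\}=(r+p(\mathbb Z/pq\mathbb Z))\setminus\{r\}$.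
   Context: A complex Hadamard matrix has all entries of modulus one and pairwise orthogonal rows. For $d\mid pq$, $d(\mathbb Z/pq\mathbb Z)$ denotes the subgroup of multiples of $d$ in $\mathbb Z/pq\mathbb Z$ (so $q(\mathbb Z/pq\mathbb Z)$ has $p$ elements and $p(\mathbb Z/pq\mathbb Z)$ has $q$ elements). *)

(* Defs.v *)
From HB Require Import structures.
From mathcomp Require Import all_boot all_order all_algebra all_field.
Set Implicit Arguments. Unset Strict Implicit. Unset Printing Implicit Defensive.
Import Order.TTheory GRing.Theory Num.Theory.
Local Open Scope ring_scope.

Definition complex_hadamard (n : nat) (H : 'M[algC]_n) : Prop :=
  (forall i j, `|H i j| = 1) /\
  (forall i j, i != j -> \sum_k H i k * (H j k)^* = 0).

(* The matrix (z^{m_ik}) for M with entries in Z/dZ, with z a primitive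
   d-th root of unity (playing the role of e^{2 pi i / d}). *)
Definition exp_mx (d n : nat) (z : algC) (M : 'M['Z_d]_n) : 'M[algC]_n :=
  \matrix_(i, k) z ^+ (nat_of_ord (M i k)).

Definition Ldiff (d n : nat) (M : 'M['Z_d]_n) (i j : 'I_n) : 'I_n -> 'Z_d :=
  fun k => M j k - M i k.

Definition coset_mult (d : nat) (c : nat) (r : 'Z_d) : {set 'Z_d} :=
  [set r + (c%:R * x) | x : 'Z_d].

(* Main.v *)
From HB Require Import structures.
From mathcomp Require Import all_boot all_order all_algebra all_field.
From mathcomp Require Import zify.
Require Import Defs.
Set Implicit Arguments. Unset Strict Implicit. Unset Printing Implicit Defensive.
Import Order.TTheory GRing.Theory Num.Theory.
Local Open Scope ring_scope.

Lemma galois_sum n (I : finType) (E : I -> nat) (z z' : algC) :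
  n.-primitive_root z -> n.-primitive_root z' ->
  \sum_k z ^+ E k = 0 -> \sum_k z' ^+ E k = 0.
Proof.
move=> pz pz' s0.
pose f : {poly rat} := \sum_k 'X^(E k).
have [p0 [D0 _] H0] := minCpolyP z.
have [p1 [D1 _] H1] := minCpolyP z'.
set g := map_poly _ in D0 H0 D1 H1.
have ev w : (g f).[w] = \sum_k w ^+ E k.
  rewrite /f (big_morph g (raddfD _) (raddf0 _)) horner_sum.
  by apply: eq_bigr => k _; rewrite /g map_polyXn hornerXn.
have e01 : p0 = p1.
  have : g p0 = g p1.
    by rewrite -D0 -D1 (minCpoly_cyclotomic pz) (minCpoly_cyclotomic pz') -(Cintr_Cyclotomic pz) -(Cintr_Cyclotomic pz').
  exact: map_poly_inj.
have : root (g f) z by rewrite /root ev s0.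
by rewrite H0 e01 -H1 /root ev => /eqP.
Qed.

Section Basics.
Variables (p q : nat) (pp : prime p) (pq : prime q) (hpq : p != q).
Local Notation n := (p * q)%N.
Local Notation T := 'Z_(p * q).

Lemma n_gt1 : (1 < n)%N.
Proof. have := prime_gt1 pp; have := prime_gt1 pq; rewrite -!(ltn_predRL).
case: p => [|[|p']] //; case: q => [|[|q']] //. Qed.

Lemma n_neq0 : (n != 0)%N.
Proof. by rewrite -lt0n ltnW // n_gt1. Qed.

Lemma cop : coprime p q.
Proof. by rewrite prime_coprime // dvdn_prime2. Qed.

Lemma valT_lt (a : T) : (val a < n)%N.
Proof. by case: a => m hm /=; rewrite -(Zp_cast n_gt1). Qed.

Lemma valN (a : T) : (a : T) = (val a)%:R.
Proof. by rewrite natr_Zp. Qed.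

Lemma val_natr (m : nat) : val (m%:R : T) = (m %% n)%N.
Proof. exact: val_Zp_nat n_gt1 m. Qed.

Lemma valD (a b : T) : val (a + b) = ((val a + val b) %% n)%N.
Proof. by rewrite {1}(valN a) {1}(valN b) -natrD val_natr. Qed.

Lemma valB (a b : T) : val (a - b) = ((val a + (n - val b)) %% n)%N.
Proof.
rewrite -val_natr natrD natrB; last exact: ltnW (valT_lt b).
by rewrite pchar_Zp ?n_gt1 // sub0r -!valN.
Qed.

Lemma T_eq (a b : T) : (val a == val b %[mod p]) -> (val a == val b %[mod q]) -> a = b.
Proof.
move=> h1 h2; apply: val_inj; apply/eqP.
have := chinese_remainder cop (val a) (val b); rewrite h1 h2 !modn_small ?valT_lt //.
Qed.

Definition crt (x y : nat) : T := (chinese p q x y)%:R.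

Lemma crt_modp x y : val (crt x y) = x %[mod p].
Proof. by rewrite val_natr (modn_dvdm _ (dvdn_mulr q (dvdnn p))) chinese_modl // cop. Qed.

Lemma crt_modq x y : val (crt x y) = y %[mod q].
Proof. by rewrite val_natr (modn_dvdm _ (dvdn_mull p (dvdnn q))) chinese_modr // cop. Qed.

Lemma crt_mod x y : crt (x %% p) (y %% q) = crt x y.
Proof.
apply: T_eq; apply/eqP.
  exact: (etrans (crt_modp _ _) (etrans (modn_mod _ _) (esym (crt_modp _ _)))).
exact: (etrans (crt_modq _ _) (etrans (modn_mod _ _) (esym (crt_modq _ _)))).
Qed.

Lemma block d e (g : nat -> nat) : (d * e)%N = n -> (0 < d)%N ->
  (\sum_(a : T) g (val a %% d) = e * \sum_(x < d) g x)%N.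
Proof.
move=> de d0.
have -> : (\sum_(a : T) g (val a %% d) = \sum_(0 <= i < d * e) g (i %% d))%N.
  by rewrite de -(Zp_cast n_gt1) big_mkord.
rewrite mulnC; elim: e {de} => [|e IH]; first by rewrite big_geq.
rewrite mulSn (big_cat_nat _ (leq_addl _ _)) //= IH mulSn addnC; congr (_ + _)%N.
rewrite -{1}(add0n (e * d)%N) big_addn addnK big_mkord; apply: eq_bigr => i _.
by rewrite addnC modnMDl modn_small.
Qed.


Lemma geom (w : algC) m : w ^+ m = 1 ->
  \sum_(e < m) w ^+ e = if w == 1 then m%:R else 0.
Proof.
move=> wm; case: eqP => [->|/eqP w1].
  by under eq_bigr do rewrite expr1n; rewrite sumr_const card_ord.
have : (w - 1) * \sum_(e < m) w ^+ e = 0 by rewrite -subrX1 wm subrr.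
by move/eqP; rewrite mulf_eq0 subr_eq0 (negbTE w1) => /eqP.
Qed.

Lemma arith (V W : nat) : (q * V + p * W = p + q)%N -> V = 1%N /\ W = 1%N.
Proof.
have p2 := prime_gt1 pp; have q2 := prime_gt1 pq.
case: V => [|[|V]] h.
- have : (p %| q)%N by rewrite -(dvdn_addr _ (dvdnn p)) -h muln0 add0n dvdn_mulr.
  by rewrite dvdn_prime2 // (negbTE hpq).
- split=> //; apply/eqP; rewrite -(eqn_pmul2l (ltnW p2)) muln1; apply/eqP; lia.
- case: W h => [|W] h; last by lia.
  have : (q %| p)%N by rewrite -(dvdn_addl _ (dvdnn q)) -h muln0 addn0 dvdn_mulr.
  by rewrite dvdn_prime2 // eq_sym (negbTE hpq).
Qed.

Lemma sum_one (d : nat) (g : nat -> nat) : (\sum_(x < d) g x = 1)%N ->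
  exists2 x1, (x1 < d)%N & forall x, (x < d)%N -> g x = (x == x1).
Proof.
move=> s1; case: (pickP (fun x : 'I_d => 0 < g x)%N) => [x1 gx1 | h0]; last first.
  by move: s1; rewrite big1 // => i _; move: (h0 i) => /= /negbT; rewrite lt0n negbK => /eqP.
move: s1; rewrite (bigD1 x1) //= => s1.
have g1 : g x1 = 1%N by move: gx1; lia.
have r0 : (\sum_(i < d | i != x1) g i == 0)%N by rewrite -(eqn_add2l (g x1)) s1 g1.
exists (val x1); first exact: ltn_ord.
move=> x xd; have := r0; rewrite sum_nat_eq0 => /forallP /(_ (Ordinal xd)) /=.
case: (eqVneq x (val x1)) => [ex|ne]; first by move=> _; rewrite ex g1.
have -> : (Ordinal xd != x1) by apply: contra ne => /eqP <-.
by move/eqP ->.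
Qed.

Lemma crt_modl x y : crt (x %% p) y = crt x y.
Proof. by rewrite -crt_mod modn_mod crt_mod. Qed.

Lemma crt_modr x y : crt x (y %% q) = crt x y.
Proof. by rewrite -crt_mod modn_mod crt_mod. Qed.

Lemma comb (c : T -> nat)
  (rectc : forall a b a' b' : T,
     val a = val a' %[mod p] -> val b = val a' %[mod q] ->
     val b = val b' %[mod p] -> val a = val b' %[mod q] ->
     (c a + c b = c a' + c b')%N)
  (tot : (\sum_a c a = p + q)%N) :
  exists r : T, forall a : T,
    c a = ((val a == val r %[mod p]) + (val a == val r %[mod q]))%N.
Proof.
have [b0 _ hb0] := @arg_minnP T 0 xpredT (fun b => c (crt 0 (val b))) isT.
set m := c (crt 0 (val b0)) in hb0.
pose g x := c (crt x (val b0)); pose h y := (c (crt 0 y) - m)%N.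
have hcs a : c a = (g (val a %% p) + h (val a %% q))%N.
  have E := rectc a (crt 0 (val b0)) (crt (val a) (val b0)) (crt 0 (val a)).
  have E' : (c a + m = c (crt (val a) (val b0)) + c (crt 0 (val a)))%N.
    apply: E.
    - exact: (esym (crt_modp _ _)).
    - exact: (etrans (crt_modq _ _) (esym (crt_modq _ _))).
    - exact: (etrans (crt_modp _ _) (esym (crt_modp _ _))).
    - exact: (esym (crt_modq _ _)).
  have hm := hb0 a isT; rewrite /g /h crt_modl crt_modr.
  by rewrite addnBA // -E' addnK.
have sg : (\sum_a c a = q * \sum_(x < p) g x + p * \sum_(y < q) h y)%N.
  rewrite -(block g (erefl _) (prime_gt0 pp)) -(block h (mulnC q p) (prime_gt0 pq)) -big_split /=.
  by apply: eq_bigr => a _; rewrite hcs.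
have [G1 H1] := arith (etrans (esym sg) tot).
have [x1 x1p gx] := sum_one G1; have [y1 y1q hy] := sum_one H1.
exists (crt x1 y1) => a; rewrite hcs gx ?ltn_pmod ?prime_gt0 // hy ?ltn_pmod ?prime_gt0 //.
have -> : (val (crt x1 y1) %% p = x1)%N by rewrite (crt_modp x1 y1) modn_small.
by have -> : (val (crt x1 y1) %% q = y1)%N by rewrite (crt_modq x1 y1) modn_small.
Qed.

Variables (z : algC) (hz : n.-primitive_root z).
Variables (I : finType) (L : I -> T).
Hypothesis s0 : \sum_k z ^+ val (L k) = 0.

Definition cnt (a : T) := #|[set k | L k == a]|.
Definition F (e : nat) := \sum_k (z ^+ e) ^+ val (L k).
Definition G (e : nat) (a : T) := F e / z ^+ (e * val a)%N.

Lemma z_neq0 : z != 0.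
Proof.
apply/eqP => z0; have := prim_expr_order hz; rewrite z0 expr0n.
by rewrite (negbTE n_neq0) => /eqP; rewrite eq_sym oner_eq0.
Qed.

Lemma fourier (a : T) : \sum_(e < n) G e a = n%:R * (cnt a)%:R.
Proof.
have za := expf_neq0 (val a) z_neq0.
rewrite /G /F; under eq_bigr do rewrite mulr_suml.
rewrite exchange_big /=.
have -> : \sum_k \sum_(e < n) (z ^+ e) ^+ val (L k) / z ^+ (e * val a)%N
   = \sum_k \sum_(e < n) (z ^+ val (L k) / z ^+ val a) ^+ e.
  apply: eq_bigr => k _; apply: eq_bigr => e _.
  by rewrite exprMn exprVn -!exprM (mulnC e) (mulnC e).
have -> : \sum_k \sum_(e < n) (z ^+ val (L k) / z ^+ val a) ^+ e
   = \sum_k (if L k == a then n%:R else 0).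
  apply: eq_bigr => k _; rewrite geom; last first.
    have zn m : z ^+ (m * n) = 1 by rewrite mulnC exprM (prim_expr_order hz) expr1n.
    by rewrite exprMn exprVn -!exprM !zn invr1 mulr1.
  congr (if _ then _ else _).
  apply/idP/idP => [/eqP/divr1_eq/eqP|/eqP ->]; last by rewrite divff.
  rewrite (eq_prim_root_expr hz) !modn_small ?valT_lt // => /eqP h.
rewrite -big_mkcond /= sumr_const mulr_natr; congr (_ *+ _).
by rewrite /cnt cardsE.
Qed.

Lemma expz_mod d d' e x y : (d * d')%N = n -> (d %| e)%N -> x = y %[mod d'] ->
  z ^+ (e * x)%N = z ^+ (e * y)%N.
Proof.
move=> dd /dvdnP [e' ->] xy; apply/eqP; rewrite (eq_prim_root_expr hz) -dd.
rewrite (mulnC e' d) -!mulnA -!muln_modr; apply/eqP; congr (_ * _)%N.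
by rewrite -modnMmr xy modnMmr.
Qed.

Lemma F_coprime e : coprime e n -> F e = 0.
Proof.
move=> ce; apply: (galois_sum hz); first by rewrite prim_root_exp_coprime.
exact: s0.
Qed.

Lemma rect (a b a' b' : T) :
  val a = val a' %[mod p] -> val b = val a' %[mod q] ->
  val b = val b' %[mod p] -> val a = val b' %[mod q] ->
  (cnt a + cnt b = cnt a' + cnt b')%N.
Proof.
move=> h1 h2 h3 h4.
have key (e : 'I_n) : G e a + G e b = G e a' + G e b'.
  case ce: (coprime e n).
    by rewrite /G !F_coprime // !mul0r addr0.
  have : (p %| e)%N || (q %| e)%N.
    move: ce; rewrite coprimeMr !(coprime_sym e) !prime_coprime //.
    by case: (p %| e)%N; case: (q %| e)%N.
  case/orP => de.
    by rewrite /G (expz_mod (erefl n) de h4) (expz_mod (erefl n) de h2) addrC.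
  by rewrite /G (expz_mod (mulnC q p) de h1) (expz_mod (mulnC q p) de h3).
have : n%:R * (cnt a + cnt b)%:R = n%:R * (cnt a' + cnt b')%:R :> algC.
  by rewrite !natrD !mulrDr -!fourier -!big_split /=; apply: eq_bigr => e _; apply: key.
move/(mulfI _)/eqP; rewrite pnatr_eq0 eqr_nat.
by rewrite n_neq0 => /(_ isT) /eqP.
Qed.

End Basics.

Section Final.
Variables (p q : nat) (pp : prime p) (pq : prime q) (hpq : p != q).
Local Notation n := (p * q)%N.
Local Notation T := 'Z_(p * q).

Lemma coset_mem d (dd : (d %| n)%N) (r a : T) :
  (a \in coset_mult d r) = (val a == val r %[mod d]).
Proof.
apply/imsetP/idP => [[x _ ->]|h].
  have -> : r + d%:R * x = (val r + d * val x)%:R :> T.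
    by rewrite natrD natrM -!valN.
  by rewrite (val_natr pp pq) (modn_dvdm _ dd) addnC mulnC modnMDl.
exists (((val a + (n - val r)) %/ d)%:R) => //.
have dv : (d %| val a + (n - val r))%N.
  have X : ((val a + (n - val r)) %% d = (val r + (n - val r)) %% d)%N.
    by rewrite -modnDml (eqP h) modnDml.
  rewrite /dvdn X subnKC; [exact: dd | exact: ltnW (valT_lt pp pq r)].
have E : (val r + d * ((val a + (n - val r)) %/ d) = val a + n)%N.
  rewrite (mulnC d) (divnK dv) addnCA subnKC //; exact: ltnW (valT_lt pp pq r).
have Hr := valN r; rewrite -natrM {1}Hr -natrD E natrD (pchar_Zp (n_gt1 pp pq)) addr0.
exact: valN.
Qed.

Lemma side (I : finType) (L : I -> T) (r : T) d e (de : (d * e)%N = n) (d0 : (0 < d)%N)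
  (hr : forall a, cnt L a = ((val a == val r %[mod d]) + (val a == val r %[mod e]))%N)
  (cr : forall a : T, val a == val r %[mod d] -> val a == val r %[mod e] -> a = r) :
  #|[set k | (val (L k) == val r %[mod d]) && (L k != r)]| = e.-1 /\
  L @: [set k | (val (L k) == val r %[mod d]) && (L k != r)] = coset_mult d r :\ r.
Proof.
set P := [set k | _].
have dd : (d %| n)%N by rewrite -de dvdn_mulr.
have c1 a : val a == val r %[mod d] -> a != r -> cnt L a = 1%N.
  move=> h1 ne; rewrite hr h1; case h2: (val a == val r %[mod e]) => //.
  by rewrite (cr _ h1 h2) eqxx in ne.
have img : L @: P = coset_mult d r :\ r.
  apply/setP => a; rewrite in_setD1 coset_mem //.
  apply/imsetP/andP => [[k] | [ne h1]].
    by rewrite inE => /andP [h1 ne] ->.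
  have : (0 < cnt L a)%N by rewrite c1.
  case/card_gt0P => k; rewrite inE => /eqP ek.
  by exists k => //; rewrite inE ek h1 ne.
split=> //.
rewrite -(card_in_imset (f:=L)); last first.
  move=> k k' kP k'P ekk.
  move: kP; rewrite inE => /andP [h1 ne].
  have := c1 _ h1 ne; rewrite /cnt => /eqP /cards1P [x hx].
  have : k \in [set k0 | L k0 == L k] by rewrite inE.
  have : k' \in [set k0 | L k0 == L k] by rewrite inE ekk.
  by rewrite hx !inE => /eqP -> /eqP ->.
rewrite img.
have rin : r \in coset_mult d r by rewrite coset_mem.
have ce : #|coset_mult d r| = e.
  have -> : #|coset_mult d r| =
      (\sum_(a : T) (fun y => nat_of_bool (y == val r %% d)) (val a %% d))%N.
    by rewrite -sum1_card big_mkcond /=; apply: eq_bigr => a _; rewrite coset_mem.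
  rewrite (block pp pq (fun y => nat_of_bool (y == val r %% d)%N) de d0) (bigD1 (Ordinal (ltn_pmod (val r) d0))) //= eqxx.
  rewrite big1 ?addn0 ?muln1 // => y ne.
  have : (val y == val r %% d)%N = false.
    by apply/negbTE; apply: contra ne => /eqP hy; apply/eqP; apply: val_inj.
  by move=> ->.
by move: (cardsD1 r (coset_mult d r)); rewrite rin ce => ->.
Qed.

End Final.

Unset Implicit Arguments.

Theorem lemma6p1 (p q : nat) (pp : prime p) (pq : prime q) (hpq : p != q)
  (z : algC) (hz : (p * q).-primitive_root z)
  (M : 'M['Z_(p * q)]_(p + q))
  (hH : complex_hadamard (exp_mx z M)) :
  forall i j : 'I_(p + q), i != j ->
  exists (P Q R : {set 'I_(p + q)}) (r : 'Z_(p * q)),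
    [/\ [/\ [disjoint P & Q], [disjoint P & R], [disjoint Q & R]
           & P :|: Q :|: R = setT],
        #|R| = 2%N /\ (forall k, k \in R -> Ldiff M i j k = r),
        #|P| = p.-1 /\ Ldiff M i j @: P = coset_mult q r :\ r
      & #|Q| = q.-1 /\ Ldiff M i j @: Q = coset_mult p r :\ r].
Proof.
move=> i j ij.
set L := Ldiff M i j.
have s0 : \sum_k z ^+ val (L k) = 0.
  have [Hn Ho] := hH.
  have := Ho j i; rewrite eq_sym => /(_ ij) h; apply: etrans h.
  apply: eq_bigr => k _; rewrite !mxE.
  rewrite /L /Ldiff (valB pp pq) (prim_expr_mod hz) exprD; congr (_ * _).
  have h1 := Hn i k; rewrite mxE in h1.
  have nz : z ^+ M i k != 0 by rewrite -normr_eq0 h1 oner_eq0.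
  have -> : (z ^+ M i k)^* = (z ^+ M i k)^-1 by rewrite invC_norm h1 expr1n invr1 mul1r.
  apply: (mulIf nz); rewrite mulVf // -exprD subnK ?(prim_expr_order hz) //.
  exact: ltnW (valT_lt pp pq _).
have rectc := rect pp pq hz s0.
have tot : (\sum_a cnt L a = p + q)%N.
  transitivity (\sum_(k < p + q) 1)%N; last by rewrite big_const_ord iter_addn_0 mul1n.
  rewrite [RHS](partition_big L xpredT) //=; apply: eq_bigr => a _.
  by rewrite /cnt -sum1_card; apply: eq_bigl => k; rewrite inE.
have [r hr] := comb pp pq hpq rectc tot.
have cr := @T_eq p q pp pq hpq.
exists [set k | (val (L k) == val r %[mod q]) && (L k != r)],
       [set k | (val (L k) == val r %[mod p]) && (L k != r)],
       [set k | L k == r], r.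
have [P1 P2] := side pp pq (mulnC q p) (prime_gt0 pq)
  (fun a => etrans (hr a) (addnC _ _)) (fun a h1 h2 => cr a r h2 h1).
have [Q1 Q2] := side pp pq (erefl _) (prime_gt0 pp) hr (fun a h1 h2 => cr a r h1 h2).
have dj (A B : {set 'I_(p+q)}) : (forall k, k \in A -> k \in B -> False) -> [disjoint A & B].
  move=> H; rewrite disjoint_subset; apply/subsetP => k kA; rewrite inE.
  by apply/negP => kB; exact: H k kA kB.
split=> //.
- split.
  + apply: dj => k; rewrite !inE => /andP [h1 ne] /andP [h2 _].
    by rewrite (cr _ _ h2 h1) eqxx in ne.
  + by apply: dj => k; rewrite !inE => /andP [_ ne] /eqP e; rewrite e eqxx in ne.
  + by apply: dj => k; rewrite !inE => /andP [_ ne] /eqP e; rewrite e eqxx in ne.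
  + apply/setP => k; rewrite !inE.
    have : (0 < cnt L (L k))%N by apply/card_gt0P; exists k; rewrite inE.
    rewrite hr; case: (L k == r); rewrite ?orbT // ?andbT.
    case: (val (L k) == val r %[mod q]) => //.
    by case: (val (L k) == val r %[mod p]).
- split; first by have := hr r; rewrite /cnt !eqxx.
  by move=> k; rewrite inE => /eqP.
Qed.
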